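(* For $i=1,2$ let $g_i\in SU(2)$ be a lift of a rotation of $S^2\cong\mathbb{C}P^1$ by an arbitrarily small angle $\epsilon_i$ (about different axes for $i=1,2$), and let \[\Upsilon_i=\{[a,g_i(a),b]\in\mathrm{Sym}^3\mathbb{C}P^1:\ a,b\in\mathbb{C}P^1\}\subset\mathrm{Sym}^3\mathbb{C}P^1\cong\mathbb{C}P^3.\] Then $\deg\Upsilon_i=4$.
   Context: $\mathrm{Sym}^3\mathbb{C}P^1$ is identified with $\mathbb{C}P^3=\mathbb{P}(S^3\mathbb{C}^2)$ by sending an unordered triple of points of $\mathbb{C}P^1$ to the (projectivized) product of the corresponding linear forms, i.e. the homogeneous cubic in two variables with those roots. $SU(2)$ acts on $\mathbb{C}P^1\cong S^2$ by rotations. The degree of a complex surface in $\mathbb{C}P^3$ is the number of its intersection points with a generic line. *)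

(* Defs.v *)
From HB Require Import structures.
From mathcomp Require Import all_boot all_order all_algebra.
From mathcomp Require Import mpoly.
From mathcomp Require Import all_classical all_reals all_analysis.
From mathcomp Require Import complex.
Set Implicit Arguments. Unset Strict Implicit. Unset Printing Implicit Defensive.
Import Order.TTheory GRing.Theory Num.Theory.
Local Open Scope ring_scope.

Section Defs.
Variable R : realType.
Local Notation C := (complex R).

Definition is_SU2 (g : 'M[C]_2) : Prop :=
  g *m (map_mx (@conjc R) g)^T = 1%:M /\ \det g = 1.

(* The identification CP^1 = S^2 (Bloch / Hopf map): for a nonzero a in C^2,
   [a0 : a1] |-> (2 Re(conj a0 a1), 2 Im(conj a0 a1), |a0|^2 - |a1|^2) / (|a0|^2 + |a1|^2). *)
Definition bloch (a : 'cV[C]_2) : 'cV[R]_3 :=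
  let a0 := a 0 0 in let a1 := a 1 0 in
  let z := conjc a0 * a1 in
  let n0 := complex.Re (conjc a0 * a0) in let n1 := complex.Re (conjc a1 * a1) in
  let N := n0 + n1 in
  \col_(k < 3) (nth 0 [:: 2 * complex.Re z / N; 2 * complex.Im z / N; (n0 - n1) / N] k).

Definition rotation_by (rho : 'M[R]_3) (eps : R) : Prop :=
  rho^T *m rho = 1%:M /\ \det rho = 1 /\ \tr rho = 1 + 2 * cos eps.

Definition lifts_rotation_by (g : 'M[C]_2) (eps : R) : Prop :=
  exists rho : 'M[R]_3, rotation_by rho eps /\
    forall a : 'cV[C]_2, a != 0 -> bloch (g *m a) = rho *m bloch a.

(* The linear form in (u,v) vanishing at the point [a0 : a1]:  a1 u - a0 v,
   encoded as its coefficient pair (coef of u, coef of v). *)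
Definition linform (a : 'cV[C]_2) : C * C := (a 1 0, - a 0 0).

(* Coefficients (of u^3, u^2 v, u v^2, v^3) of the product of three linear forms:
   this is the identification Sym^3 CP^1 = P(S^3 C^2) = CP^3. *)
Definition cubic3 (l1 l2 l3 : C * C) : 'cV[C]_4 :=
  let: (x1, y1) := l1 in let: (x2, y2) := l2 in let: (x3, y3) := l3 in
  \col_(k < 4) (nth 0 [:: x1 * x2 * x3;
                         x1 * x2 * y3 + x1 * y2 * x3 + y1 * x2 * x3;
                         x1 * y2 * y3 + y1 * x2 * y3 + y1 * y2 * x3;
                         y1 * y2 * y3] k).

(* The (affine cone over the) surface Upsilon_g = { [a, g(a), b] } in CP^3. *)
Definition Upsilon (g : 'M[C]_2) (w : 'cV[C]_4) : Prop :=
  exists a b : 'cV[C]_2, a != 0 /\ b != 0 /\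
    w = cubic3 (linform a) (linform (g *m a)) (linform b).

Definition proj_eq (w w' : 'cV[C]_4) : Prop := exists c : C, c != 0 /\ w' = c *: w.

Definition proj_card (S : 'cV[C]_4 -> Prop) (n : nat) : Prop :=
  exists f : 'I_n -> 'cV[C]_4,
    (forall i, f i != 0 /\ S (f i)) /\
    (forall i j, proj_eq (f i) (f j) -> i = j) /\
    (forall w, w != 0 -> S w -> exists i, proj_eq (f i) w).

Definition on_line (p q w : 'cV[C]_4) : Prop := exists s t : C, w = s *: p + t *: q.

Definition pq_coords (p q : 'cV[C]_4) : 'I_8 -> C :=
  fun i => if (i < 4)%N then p (inord i) 0 else q (inord (i - 4)) 0.

(* Degree of a surface S in CP^3: number of intersection points with a generic line,
   i.e. for all lines spanned by (p,q) outside the zero set of some nonzero polynomial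
   in the 8 coordinates of (p,q) (a proper Zariski-closed set). *)
Definition has_degree (S : 'cV[C]_4 -> Prop) (d : nat) : Prop :=
  exists P : {mpoly C[8]}, P != 0 /\
    forall p q : 'cV[C]_4, P.@[pq_coords p q] != 0 ->
      proj_card (fun w => on_line p q w /\ S w) d.

End Defs.

(* Main.v *)
Require Import Defs.
From HB Require Import structures.
From mathcomp Require Import all_boot all_order all_algebra.
From mathcomp Require Import mpoly.
From mathcomp Require Import all_classical all_reals all_analysis.
From mathcomp Require Import complex.
From mathcomp Require Import separable.
From mathcomp Require Import ring lra zify.
Set Implicit Arguments. Unset Strict Implicit. Unset Printing Implicit Defensive.
Import Order.TTheory GRing.Theory Num.Theory.
Local Open Scope ring_scope.


Definition FL : seq (seq (int * seq nat) * seq nat) := [::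
  ([:: ((Posz 1), [:: 1; 1; 1; 1; 1; 1])], [:: 3; 3; 3; 3]);
  ([:: ((Negz 1), [:: 1; 1; 1; 1; 1; 3]); ((Posz 2), [:: 0; 1; 1; 1; 1; 1])], [:: 2; 3; 3; 3]);
  ([:: ((Posz 1), [:: 1; 1; 1; 1; 3; 3]); ((Negz 3), [:: 0; 1; 1; 1; 1; 3]); ((Posz 1), [:: 0; 0; 1; 1; 1; 1])], [:: 2; 2; 3; 3]);
  ([:: ((Posz 2), [:: 0; 1; 1; 1; 3; 3]); ((Negz 1), [:: 0; 0; 1; 1; 1; 3])], [:: 2; 2; 2; 3]);
  ([:: ((Posz 1), [:: 0; 0; 1; 1; 3; 3])], [:: 2; 2; 2; 2]);
  ([:: ((Posz 2), [:: 1; 1; 1; 1; 3; 3]); ((Negz 1), [:: 1; 1; 1; 1; 1; 2]); ((Posz 2), [:: 0; 1; 1; 1; 1; 3]); ((Posz 2), [:: 0; 0; 1; 1; 1; 1])], [:: 1; 3; 3; 3]);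
  ([:: ((Negz 1), [:: 1; 1; 1; 3; 3; 3]); ((Posz 3), [:: 1; 1; 1; 1; 2; 3]); ((Posz 1), [:: 0; 1; 1; 1; 3; 3]); ((Negz 2), [:: 0; 1; 1; 1; 1; 2]); ((Negz 0), [:: 0; 0; 1; 1; 1; 3]); ((Posz 2), [:: 0; 0; 0; 1; 1; 1])], [:: 1; 2; 3; 3]);
  ([:: ((Negz 0), [:: 1; 1; 1; 2; 3; 3]); ((Negz 2), [:: 0; 1; 1; 3; 3; 3]); ((Posz 4), [:: 0; 1; 1; 1; 2; 3]); ((Negz 0), [:: 0; 0; 1; 1; 1; 2]); ((Negz 2), [:: 0; 0; 0; 1; 1; 3])], [:: 1; 2; 2; 3]);
  ([:: ((Negz 0), [:: 0; 1; 1; 2; 3; 3]); ((Negz 0), [:: 0; 0; 1; 3; 3; 3]); ((Posz 1), [:: 0; 0; 1; 1; 2; 3]); ((Posz 1), [:: 0; 0; 0; 1; 3; 3])], [:: 1; 2; 2; 2]);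
  ([:: ((Posz 1), [:: 1; 1; 3; 3; 3; 3]); ((Negz 1), [:: 1; 1; 1; 2; 3; 3]); ((Posz 1), [:: 1; 1; 1; 1; 2; 2]); ((Posz 2), [:: 0; 1; 1; 3; 3; 3]); ((Posz 3), [:: 0; 0; 1; 1; 3; 3]); ((Negz 1), [:: 0; 0; 1; 1; 1; 2]); ((Posz 2), [:: 0; 0; 0; 1; 1; 3]); ((Posz 1), [:: 0; 0; 0; 0; 1; 1])], [:: 1; 1; 3; 3]);
  ([:: ((Posz 1), [:: 1; 1; 2; 3; 3; 3]); ((Negz 0), [:: 1; 1; 1; 2; 2; 3]); ((Posz 1), [:: 0; 1; 3; 3; 3; 3]); ((Negz 2), [:: 0; 1; 1; 2; 3; 3]); ((Posz 1), [:: 0; 1; 1; 1; 2; 2]); ((Posz 3), [:: 0; 0; 1; 1; 2; 3]); ((Negz 0), [:: 0; 0; 0; 1; 1; 2]); ((Negz 0), [:: 0; 0; 0; 0; 1; 3])], [:: 1; 1; 2; 3]);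
  ([:: ((Posz 1), [:: 0; 1; 2; 3; 3; 3]); ((Negz 0), [:: 0; 1; 1; 2; 2; 3]); ((Negz 1), [:: 0; 0; 1; 2; 3; 3]); ((Negz 0), [:: 0; 0; 0; 3; 3; 3]); ((Posz 1), [:: 0; 0; 0; 1; 2; 3])], [:: 1; 1; 2; 2]);
  ([:: ((Posz 1), [:: 1; 1; 2; 2; 3; 3]); ((Posz 1), [:: 0; 0; 3; 3; 3; 3]); ((Negz 1), [:: 0; 0; 1; 2; 3; 3]); ((Posz 1), [:: 0; 0; 1; 1; 2; 2]); ((Posz 2), [:: 0; 0; 0; 3; 3; 3]); ((Posz 1), [:: 0; 0; 0; 0; 3; 3])], [:: 1; 1; 1; 3]);
  ([:: ((Posz 1), [:: 0; 1; 2; 2; 3; 3]); ((Posz 1), [:: 0; 0; 2; 3; 3; 3]); ((Negz 0), [:: 0; 0; 1; 2; 2; 3]); ((Negz 0), [:: 0; 0; 0; 2; 3; 3])], [:: 1; 1; 1; 2]);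
  ([:: ((Posz 1), [:: 0; 0; 2; 2; 3; 3])], [:: 1; 1; 1; 1]);
  ([:: ((Negz 1), [:: 1; 1; 1; 3; 3; 3]); ((Posz 3), [:: 1; 1; 1; 1; 2; 3]); ((Negz 2), [:: 0; 1; 1; 1; 3; 3]); ((Negz 2), [:: 0; 1; 1; 1; 1; 2]); ((Posz 3), [:: 0; 0; 1; 1; 1; 3]); ((Posz 2), [:: 0; 0; 0; 1; 1; 1])], [:: 0; 3; 3; 3]);
  ([:: ((Posz 2), [:: 1; 1; 3; 3; 3; 3]); ((Negz 4), [:: 1; 1; 1; 2; 3; 3]); ((Posz 2), [:: 1; 1; 1; 1; 2; 2]); ((Posz 1), [:: 0; 1; 1; 3; 3; 3]); ((Posz 4), [:: 0; 1; 1; 1; 2; 3]); ((Negz 5), [:: 0; 0; 1; 1; 3; 3]); ((Negz 4), [:: 0; 0; 1; 1; 1; 2]); ((Posz 1), [:: 0; 0; 0; 1; 1; 3]); ((Posz 2), [:: 0; 0; 0; 0; 1; 1])], [:: 0; 2; 3; 3]);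
  ([:: ((Posz 2), [:: 1; 1; 2; 3; 3; 3]); ((Negz 1), [:: 1; 1; 1; 2; 2; 3]); ((Posz 2), [:: 0; 1; 3; 3; 3; 3]); ((Negz 2), [:: 0; 1; 1; 2; 3; 3]); ((Posz 2), [:: 0; 1; 1; 1; 2; 2]); ((Posz 3), [:: 0; 0; 1; 3; 3; 3]); ((Posz 3), [:: 0; 0; 1; 1; 2; 3]); ((Negz 2), [:: 0; 0; 0; 1; 3; 3]); ((Negz 1), [:: 0; 0; 0; 1; 1; 2]); ((Negz 1), [:: 0; 0; 0; 0; 1; 3])], [:: 0; 2; 2; 3]);
  ([:: ((Posz 1), [:: 1; 1; 2; 2; 3; 3]); ((Posz 1), [:: 0; 0; 3; 3; 3; 3]); ((Negz 1), [:: 0; 0; 1; 2; 3; 3]); ((Posz 1), [:: 0; 0; 1; 1; 2; 2]); ((Posz 2), [:: 0; 0; 0; 3; 3; 3]); ((Posz 1), [:: 0; 0; 0; 0; 3; 3])], [:: 0; 2; 2; 2]);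
  ([:: ((Negz 1), [:: 1; 3; 3; 3; 3; 3]); ((Posz 5), [:: 1; 1; 2; 3; 3; 3]); ((Negz 4), [:: 1; 1; 1; 2; 2; 3]); ((Negz 4), [:: 0; 1; 3; 3; 3; 3]); ((Posz 3), [:: 0; 1; 1; 2; 3; 3]); ((Posz 5), [:: 0; 1; 1; 1; 2; 2]); ((Negz 1), [:: 0; 0; 1; 3; 3; 3]); ((Negz 2), [:: 0; 0; 1; 1; 2; 3]); ((Posz 2), [:: 0; 0; 0; 1; 3; 3]); ((Negz 4), [:: 0; 0; 0; 1; 1; 2]); ((Posz 5), [:: 0; 0; 0; 0; 1; 3]); ((Posz 2), [:: 0; 0; 0; 0; 0; 1])], [:: 0; 1; 3; 3]);
  ([:: ((Negz 2), [:: 1; 2; 3; 3; 3; 3]); ((Posz 3), [:: 1; 1; 2; 2; 3; 3]); ((Negz 1), [:: 1; 1; 1; 2; 2; 2]); ((Negz 0), [:: 0; 3; 3; 3; 3; 3]); ((Posz 6), [:: 0; 1; 2; 3; 3; 3]); ((Negz 11), [:: 0; 1; 1; 2; 2; 3]); ((Negz 4), [:: 0; 0; 3; 3; 3; 3]); ((Posz 12), [:: 0; 0; 1; 2; 3; 3]); ((Posz 3), [:: 0; 0; 1; 1; 2; 2]); ((Negz 5), [:: 0; 0; 0; 3; 3; 3]); ((Posz 6), [:: 0; 0; 0; 1; 2; 3]); ((Negz 4), [:: 0; 0; 0; 0; 3; 3]); ((Negz 2), [:: 0; 0; 0; 0; 1; 2]); ((Negz 0), [:: 0; 0; 0; 0;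 0; 3])], [:: 0; 1; 2; 3]);
  ([:: ((Negz 0), [:: 1; 2; 2; 3; 3; 3]); ((Posz 1), [:: 1; 1; 2; 2; 2; 3]); ((Negz 0), [:: 0; 2; 3; 3; 3; 3]); ((Posz 3), [:: 0; 1; 2; 2; 3; 3]); ((Negz 0), [:: 0; 1; 1; 2; 2; 2]); ((Negz 2), [:: 0; 0; 1; 2; 2; 3]); ((Posz 1), [:: 0; 0; 0; 1; 2; 2]); ((Posz 1), [:: 0; 0; 0; 0; 2; 3])], [:: 0; 1; 2; 2]);
  ([:: ((Negz 1), [:: 1; 2; 2; 3; 3; 3]); ((Posz 2), [:: 1; 1; 2; 2; 2; 3]); ((Negz 1), [:: 0; 2; 3; 3; 3; 3]); ((Posz 3), [:: 0; 1; 2; 2; 3; 3]); ((Negz 1), [:: 0; 1; 1; 2; 2; 2]); ((Negz 2), [:: 0; 0; 2; 3; 3; 3]); ((Negz 2), [:: 0; 0; 1; 2; 2; 3]); ((Posz 3), [:: 0; 0; 0; 2; 3; 3]); ((Posz 2), [:: 0; 0; 0; 1; 2; 2]); ((Posz 2), [:: 0; 0; 0; 0; 2; 3])], [:: 0; 1; 1; 3]);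
  ([:: ((Negz 0), [:: 1; 2; 2; 2; 3; 3]); ((Negz 2), [:: 0; 2; 2; 3; 3; 3]); ((Posz 4), [:: 0; 1; 2; 2; 2; 3]); ((Negz 0), [:: 0; 0; 1; 2; 2; 2]); ((Negz 2), [:: 0; 0; 0; 2; 2; 3])], [:: 0; 1; 1; 2]);
  ([:: ((Negz 1), [:: 0; 2; 2; 2; 3; 3]); ((Posz 2), [:: 0; 0; 2; 2; 2; 3])], [:: 0; 1; 1; 1]);
  ([:: ((Posz 1), [:: 3; 3; 3; 3; 3; 3]); ((Negz 2), [:: 1; 2; 3; 3; 3; 3]); ((Posz 9), [:: 1; 1; 2; 2; 3; 3]); ((Negz 1), [:: 1; 1; 1; 2; 2; 2]); ((Posz 3), [:: 0; 3; 3; 3; 3; 3]); ((Negz 14), [:: 0; 1; 2; 3; 3; 3]); ((Posz 9), [:: 0; 1; 1; 2; 2; 3]); ((Posz 6), [:: 0; 0; 3; 3; 3; 3]); ((Negz 17), [:: 0; 0; 1; 2; 3; 3]); ((Posz 9), [:: 0; 0; 1; 1; 2; 2]); ((Posz 7), [:: 0; 0; 0; 3; 3; 3]); ((Negz 14), [:: 0; 0; 0; 1; 2; 3]); ((Posz 6), [:: 0; 0; 0; 0; 3; 3]); ((Negz 2), [:: 0; 0; 0; 0; 1; 2]); ((Posz 3), [:: 0; 0; 0; 0; 0; 3]); ((Posz 1), [:: 0; 0; 0; 0; 0; 0])], [:: 0; 0; 3; 3]);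
  ([:: ((Posz 2), [:: 2; 3; 3; 3; 3; 3]); ((Negz 4), [:: 1; 2; 2; 3; 3; 3]); ((Posz 5), [:: 1; 1; 2; 2; 2; 3]); ((Posz 5), [:: 0; 2; 3; 3; 3; 3]); ((Negz 2), [:: 0; 1; 2; 2; 3; 3]); ((Negz 4), [:: 0; 1; 1; 2; 2; 2]); ((Posz 2), [:: 0; 0; 2; 3; 3; 3]); ((Posz 3), [:: 0; 0; 1; 2; 2; 3]); ((Negz 1), [:: 0; 0; 0; 2; 3; 3]); ((Posz 5), [:: 0; 0; 0; 1; 2; 2]); ((Negz 4), [:: 0; 0; 0; 0; 2; 3]); ((Negz 1), [:: 0; 0; 0; 0; 0; 2])], [:: 0; 0; 2; 3]);
  ([:: ((Posz 1), [:: 2; 2; 3; 3; 3; 3]); ((Negz 1), [:: 1; 2; 2; 2; 3; 3]); ((Posz 1), [:: 1; 1; 2; 2; 2; 2]); ((Posz 2), [:: 0; 2; 2; 3; 3; 3]); ((Posz 3), [:: 0; 0; 2; 2; 3; 3]); ((Negz 1), [:: 0; 0; 1; 2; 2; 2]); ((Posz 2), [:: 0; 0; 0; 2; 2; 3]); ((Posz 1), [:: 0; 0; 0; 0; 2; 2])], [:: 0; 0; 2; 2]);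
  ([:: ((Posz 2), [:: 2; 2; 3; 3; 3; 3]); ((Negz 4), [:: 1; 2; 2; 2; 3; 3]); ((Posz 2), [:: 1; 1; 2; 2; 2; 2]); ((Posz 1), [:: 0; 2; 2; 3; 3; 3]); ((Posz 4), [:: 0; 1; 2; 2; 2; 3]); ((Negz 5), [:: 0; 0; 2; 2; 3; 3]); ((Negz 4), [:: 0; 0; 1; 2; 2; 2]); ((Posz 1), [:: 0; 0; 0; 2; 2; 3]); ((Posz 2), [:: 0; 0; 0; 0; 2; 2])], [:: 0; 0; 1; 3]);
  ([:: ((Posz 2), [:: 2; 2; 2; 3; 3; 3]); ((Negz 2), [:: 1; 2; 2; 2; 2; 3]); ((Negz 0), [:: 0; 2; 2; 2; 3; 3]); ((Posz 3), [:: 0; 1; 2; 2; 2; 2]); ((Posz 1), [:: 0; 0; 2; 2; 2; 3]); ((Negz 1), [:: 0; 0; 0; 2; 2; 2])], [:: 0; 0; 1; 2]);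
  ([:: ((Posz 1), [:: 2; 2; 2; 2; 3; 3]); ((Negz 3), [:: 0; 2; 2; 2; 2; 3]); ((Posz 1), [:: 0; 0; 2; 2; 2; 2])], [:: 0; 0; 1; 1]);
  ([:: ((Posz 2), [:: 2; 2; 2; 3; 3; 3]); ((Negz 2), [:: 1; 2; 2; 2; 2; 3]); ((Posz 3), [:: 0; 2; 2; 2; 3; 3]); ((Posz 3), [:: 0; 1; 2; 2; 2; 2]); ((Negz 2), [:: 0; 0; 2; 2; 2; 3]); ((Negz 1), [:: 0; 0; 0; 2; 2; 2])], [:: 0; 0; 0; 3]);
  ([:: ((Posz 2), [:: 2; 2; 2; 2; 3; 3]); ((Negz 1), [:: 1; 2; 2; 2; 2; 2]); ((Posz 2), [:: 0; 2; 2; 2; 2; 3]); ((Posz 2), [:: 0; 0; 2; 2; 2; 2])], [:: 0; 0; 0; 2]);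
  ([:: ((Posz 2), [:: 2; 2; 2; 2; 2; 3]); ((Negz 1), [:: 0; 2; 2; 2; 2; 2])], [:: 0; 0; 0; 1]);
  ([:: ((Posz 1), [:: 2; 2; 2; 2; 2; 2])], [:: 0; 0; 0; 0])].

Section Gen.
Variable A : comNzRingType.
Implicit Types (m w : nat -> A).
Definition mprod (x : nat -> A) (s : seq nat) : A := foldr (fun i a => x i * a) 1 s.
Definition pev (L : seq (int * seq nat)) (x : nat -> A) : A :=
  foldr (fun t acc => t.1%:~R * mprod x t.2 + acc) 0 L.
Definition FgL (L : seq (seq (int * seq nat) * seq nat)) (m w : nat -> A) : A :=
  foldr (fun t acc => pev t.1 m * mprod w t.2 + acc) 0 L.
Definition Fg m w : A := FgL FL m w.
Definition beta (m : nat -> A) (l l' : A * A) : A :=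
  l'.1 * (m 2%N * l.1 + m 3%N * l.2) - l'.2 * (m 0%N * l.1 + m 1%N * l.2).
Definition cw (l1 l2 l3 : A * A) : nat -> A :=
  let: (x1, y1) := l1 in let: (x2, y2) := l2 in let: (x3, y3) := l3 in
  fun k => nth 0 [:: x1 * x2 * x3;
                         x1 * x2 * y3 + x1 * y2 * x3 + y1 * x2 * x3;
                         x1 * y2 * y3 + y1 * x2 * y3 + y1 * y2 * x3;
                         y1 * y2 * y3] k.
Lemma Fg_cubic m l1 l2 l3 : Fg m (cw l1 l2 l3) =
  beta m l1 l2 * beta m l2 l1 * beta m l1 l3 * beta m l3 l1 * beta m l2 l3 * beta m l3 l2.
Proof.
case: l1 => x1 y1; case: l2 => x2 y2; case: l3 => x3 y3.
rewrite /Fg /FgL /pev /mprod /FL /beta /cw /=.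
ring.
Qed.

Lemma mprod_ext x1 x2 s : (forall k, k \in s -> x1 k = x2 k) -> mprod x1 s = mprod x2 s.
Proof.
elim: s => //= i s IH H; rewrite H ?mem_head // IH // => k ks; apply: H.
by rewrite in_cons ks orbT.
Qed.

Lemma pev_ext L x1 x2 : (forall k, x1 k = x2 k) -> pev L x1 = pev L x2.
Proof. by move=> H; elim: L => //= t L ->; rewrite (@mprod_ext x1 x2). Qed.

Lemma FgL_ext L m1 m2 w1 w2 : all (fun t => all (fun i => i < 4)%N t.2) L ->
  (forall k, m1 k = m2 k) -> (forall k, (k < 4)%N -> w1 k = w2 k) ->
  FgL L m1 w1 = FgL L m2 w2.
Proof.
move=> HL Hm Hw; elim: L HL => //= t L IH /andP[Ht HL].
rewrite IH // (pev_ext _ Hm) (@mprod_ext w1 w2) // => k kt.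
by apply: Hw; move/allP: Ht; apply.
Qed.

Lemma Fg_ext m1 m2 w1 w2 : (forall k, m1 k = m2 k) -> (forall k, (k < 4)%N -> w1 k = w2 k) ->
  Fg m1 w1 = Fg m2 w2.
Proof. by apply: FgL_ext. Qed.

End Gen.

Section Morph.
Variables (A B : comNzRingType) (f : {rmorphism A -> B}).
Lemma mprod_morph x s : f (mprod x s) = mprod (fun k => f (x k)) s.
Proof. by elim: s => [|i s IH] /=; rewrite ?rmorph1 // rmorphM IH. Qed.
Lemma pev_morph L x : f (pev L x) = pev L (fun k => f (x k)).
Proof.
elim: L => [|t L IH] /=; first by rewrite rmorph0.
by rewrite rmorphD rmorphM rmorph_int mprod_morph IH.
Qed.
Lemma FgL_morph L m w : f (FgL L m w) = FgL L (fun k => f (m k)) (fun k => f (w k)).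
Proof.
elim: L => [|t L IH] /=; first by rewrite rmorph0.
by rewrite rmorphD rmorphM pev_morph mprod_morph IH.
Qed.
Lemma Fg_morph m w : f (Fg m w) = Fg (fun k => f (m k)) (fun k => f (w k)).
Proof. exact: FgL_morph. Qed.
End Morph.

Section PolyDeg.
Variable A : comNzRingType.
Variables (p q : nat -> A).
Let lin k : {poly A} := 'X * (p k)%:P + (q k)%:P.

Lemma mprod_lin s : (forall j, (size s < j)%N -> (mprod lin s)`_j = 0) /\
   (mprod lin s)`_(size s) = mprod p s.
Proof.
elim: s => [|i s [IH1 IH2]] /=.
  by split; [move=> [|j] //; rewrite coefC | rewrite coefC].
have E j : (lin i * mprod lin s)`_j = p i * (mprod lin s)`_j.-1 *+ (j != 0)%N + q i * (mprod lin s)`_j.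
  rewrite /lin mulrDl -mulrA coefD coefXM !coefCM.
  by case: j => [|j] //=; rewrite ?mulr0n ?add0r ?mulr1n.
split.
  move=> [|j] Hj //; rewrite E /=.
  have Hj' : (size s < j)%N by [].
  rewrite (IH1 j Hj') (IH1 j.+1 (leqW Hj')).
  by rewrite !mulr0 mul0rn addr0.
by rewrite E IH2 IH1 // mulr0 addr0 mulr1n.
Qed.

Lemma FgL_poly L m : all (fun t => size t.2 == 4)%N L ->
  (forall j, (4 < j)%N -> (FgL L (fun k => (m k)%:P) lin)`_j = 0) /\
  (FgL L (fun k => (m k)%:P) lin)`_4 = FgL L m p.
Proof.
elim: L => [|t L IH] /=.
  by move=> _; split => [j _|]; rewrite coef0.
case/andP => /eqP Ht HL; have [IH1 IH2] := IH HL.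
have E j : (pev t.1 (fun k => (m k)%:P) * mprod lin t.2)`_j = pev t.1 m * (mprod lin t.2)`_j.
  by rewrite -(pev_morph (@polyC A)) coefCM.
have [H1 H2] := mprod_lin t.2; rewrite Ht in H1 H2.
split; last by rewrite coefD E H2 IH2.
by move=> j Hj; rewrite coefD E H1 // IH1 // mulr0 addr0.
Qed.

End PolyDeg.


Lemma FL_size4 : all (fun t => size t.2 == 4)%N FL.
Proof. by []. Qed.

Lemma FL_lt4 : all (fun t => all (fun i => i < 4)%N t.2) FL.
Proof. by []. Qed.

Section Homog.
Variable A : comNzRingType.
Lemma mprod_scale (c : A) w s : mprod (fun k => c * w k) s = c ^+ size s * mprod w s.
Proof. by elim: s => [|i s IH] /=; rewrite ?expr0 ?mulr1 // IH exprS; ring. Qed.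
Lemma FgL_homog L (c : A) m w : all (fun t => size t.2 == 4)%N L ->
  FgL L m (fun k => c * w k) = c ^+ 4 * FgL L m w.
Proof.
elim: L => [|t L IH] /=; first by rewrite mulr0.
case/andP => /eqP Ht HL; rewrite IH // mprod_scale Ht; ring.
Qed.
Lemma Fg_homog (c : A) m w : Fg m (fun k => c * w k) = c ^+ 4 * Fg m w.
Proof. exact: FgL_homog FL_size4. Qed.
End Homog.

Definition Sylv (A : nzRingType) (p q : {poly A}) : 'M[A]_7 :=
  \matrix_(i < 7, j < 7) (if (i < 3)%N then p`_(j - i) *+ (i <= j)%N
                          else q`_(j - (i - 3)) *+ (i - 3 <= j)%N).

Lemma det_cast (A : nzRingType) n m (e : n = m) (M1 : 'M[A]_n) (M2 : 'M[A]_m) :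
  (forall i j, M1 i j = M2 (cast_ord e i) (cast_ord e j)) -> \det M1 = \det M2.
Proof.
case: m / e M2 => M2 H; congr (\det _); apply/matrixP => i j; by rewrite H !cast_ord_id.
Qed.

Lemma Sylv_res (A : comNzRingType) (p q : {poly A}) : (size p = 5)%N -> (size q = 4)%N ->
  resultant p q = \det (Sylv p q).
Proof.
move=> sp sq; rewrite /resultant.
have e : ((size q).-1 + (size p).-1)%N = 7 by rewrite sp sq.
apply: (@det_cast _ _ _ e (Sylvester_mx p q) (Sylv p q)) => i j; rewrite Sylvester_mxE mxE /=.
case: splitP => k Hk.
  have k3 : (k < 3)%N by apply: leq_trans (ltn_ord k) _; rewrite sq.
  by rewrite Hk k3.
have k4 : (k < 4)%N by apply: leq_trans (ltn_ord k) _; rewrite sp.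
have c1 : ((size q).-1 + k < 3)%N = false by rewrite sq /=; lia.
have c2 : ((size q).-1 + k - 3 = k)%N by rewrite sq /=; lia.
by rewrite Hk c1 c2.
Qed.

Lemma res_coprime (F : fieldType) (f h : {poly F}) : f != 0 ->
  (resultant f h != 0) = coprimep f h.
Proof.
move=> f0; rewrite resultant_eq0 coprimep_def -leqNgt.
have : size (gcdp f h) != 0%N by rewrite size_poly_eq0 gcdp_eq0 negb_and f0.
by case: (size _) => [|[|n]].
Qed.

Lemma four_roots (F : closedFieldType) (f : {poly F}) : (size f = 5)%N -> coprimep f f^`() ->
  exists rs : seq F, [/\ (size rs = 4)%N, uniq rs & forall s, root f s = (s \in rs)].
Proof.
move=> sf cop; have [rs Hrs] := closed_field_poly_normal f.
have f0 : f != 0 by rewrite -size_poly_eq0 sf.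
have lc0 : lead_coef f != 0 by rewrite lead_coef_eq0.
exists rs; split.
- by move: sf; rewrite Hrs size_scale // size_prod_XsubC => -[].
- rewrite -separable_prod_XsubC unlock.
  by move: cop; rewrite Hrs derivZ coprimepZl // coprimepZr.
- by move=> s; rewrite Hrs rootZ // root_prod_XsubC.
Qed.


Lemma det2 (A : comNzRingType) (M : 'M[A]_2) : \det M = M 0 0 * M 1 1 - M 0 1 * M 1 0.
Proof.
rewrite (expand_det_row _ 0) !big_ord_recl big_ord0 /cofactor !det_mx11 !mxE /=.
have E1 : lift (0 : 'I_2) (0 : 'I_1) = 1 by apply/val_inj.
have E2 : lift (ord0 : 'I_2) (0 : 'I_1) = 1 by apply/val_inj.
have E3 : lift (ord0 : 'I_2) (ord0 : 'I_1) = 1 by apply/val_inj.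
have E4 : lift (1 : 'I_2) (0 : 'I_1) = 0 by apply/val_inj.
have E5 : (ord0 : 'I_2) = 0 by apply/val_inj.
rewrite ?E1 ?E2 ?E3 ?E4 ?E5 /=.
rewrite (_ : (0 + 0)%N = 0%N) // (_ : (0 + bump 0 0)%N = 1%N) // expr0 expr1; ring.
Qed.

Lemma sum2 (A : nmodType) (F : 'I_2 -> A) : \sum_(i < 2) F i = F 0 + F 1.
Proof. by rewrite !big_ord_recl big_ord0 addr0; congr (F _ + F _); apply/val_inj. Qed.

Lemma sum3 (A : nmodType) (F : 'I_3 -> A) : \sum_(i < 3) F i = F 0 + F 1 + F 2%:R.
Proof.
by rewrite !big_ord_recl big_ord0 addr0 addrA; congr (F _ + F _ + F _); apply/val_inj.
Qed.

Section SU2.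
Variable R : realType.
Local Notation C := (R[i]).

Lemma su2_form (g : 'M[C]_2) : is_SU2 g ->
  [/\ g 1 1 = conjc (g 0 0), g 0 1 = - conjc (g 1 0) &
      g 0 0 * conjc (g 0 0) + g 1 0 * conjc (g 1 0) = 1].
Proof.
case=> U D; rewrite det2 in D.
have E i j : (g *m (map_mx conjc g)^T) i j = g i 0 * conjc (g j 0) + g i 1 * conjc (g j 1).
  by rewrite mxE sum2 !mxE.
have e00 := E 0 0; have e01 := E 0 1; have e10 := E 1 0; have e11 := E 1 1.
rewrite U !mxE /= in e00 e01 e10 e11.
have H1 : g 1 1 - conjc (g 0 0) =
  g 0 1 * (g 1 0 * conjc (g 0 0) + g 1 1 * conjc (g 0 1))
  - g 1 1 * (g 0 0 * conjc (g 0 0) + g 0 1 * conjc (g 0 1) - 1)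
  + conjc (g 0 0) * (g 0 0 * g 1 1 - g 0 1 * g 1 0 - 1) by ring.
rewrite -e10 -e00 D !subrr !mulr0 subr0 addr0 in H1.
have H2 : g 0 1 + conjc (g 1 0) =
  g 1 1 * (g 0 0 * conjc (g 1 0) + g 0 1 * conjc (g 1 1))
  - g 0 1 * (g 1 0 * conjc (g 1 0) + g 1 1 * conjc (g 1 1) - 1)
  - conjc (g 1 0) * (g 0 0 * g 1 1 - g 0 1 * g 1 0 - 1) by ring.
rewrite -e01 -e11 D !subrr !mulr0 subr0 in H2.
move/eqP: H1; rewrite subr_eq0 => /eqP H1.
rewrite subrr in H2.
move/eqP: H2; rewrite addr_eq0 => /eqP H2.
split => //.
by rewrite -D H1 H2; ring.
Qed.

Definition vec2 (x y : C) : 'cV[C]_2 := \col_(i < 2) nth 0 [:: x; y] i.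

Lemma vec2_neq0 x y : x != 0 -> vec2 x y != 0.
Proof.
move=> Hx; apply/negP => /eqP /matrixP /(_ 0 0); rewrite !mxE /= => E.
by rewrite E eqxx in Hx.
Qed.

Lemma mulmx_vec2 (g : 'M[C]_2) x y i : (g *m vec2 x y) i 0 = g i 0 * x + g i 1 * y.
Proof. by rewrite mxE sum2 !mxE. Qed.

Lemma mulmx_vec2' (g : 'M[C]_2) x y :
  g *m vec2 x y = vec2 (g 0 0 * x + g 0 1 * y) (g 1 0 * x + g 1 1 * y).
Proof.
apply/matrixP => i j; rewrite (ord1 j) mulmx_vec2 !mxE.
case: i => [[|[|i]] Hi] //=.
- by rewrite (_ : Ordinal Hi = 0) //; apply: val_inj.
- by rewrite (_ : Ordinal Hi = 1) //; apply: val_inj.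
Qed.

Lemma bloch_vec2 (x y : C) : bloch (vec2 x y) =
  \col_(k < 3) (nth 0 [:: 2 * complex.Re (conjc x * y) / (complex.Re (conjc x * x) + complex.Re (conjc y * y));
     2 * complex.Im (conjc x * y) / (complex.Re (conjc x * x) + complex.Re (conjc y * y));
     (complex.Re (conjc x * x) - complex.Re (conjc y * y)) / (complex.Re (conjc x * x) + complex.Re (conjc y * y))] k).
Proof. by rewrite /bloch !mxE. Qed.

Lemma rho_diag (rho : 'M[R]_3) (k : 'I_3) : (rho *m (delta_mx k 0 : 'cV_3)) k 0 = rho k k.
Proof. by rewrite -colE mxE. Qed.

Lemma trace_aux (c x1 x2 x3 n a : R) : n = 1 -> x1 + x2 + x3 = 4 * a ^+ 2 - n ->
  1 + 2 * c = 2 * x1 / (2 * n) + 2 * x2 / (2 * n) + x3 / n -> 2 * a ^+ 2 - 1 = c.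
Proof.
move=> -> H; rewrite !mulr1 divr1 => H2.
have x3e : x3 = 4 * a ^+ 2 - 1 - x1 - x2 by rewrite -H; ring.
rewrite x3e in H2.
have -> : c = ((1 + 2 * c) - 1) / 2 by field.
by rewrite H2; field.
Qed.

Lemma su2_trace (g : 'M[C]_2) eps : is_SU2 g -> lifts_rotation_by g eps ->
  exists a1 : R, g 0 0 + g 1 1 = Complex (2 * a1) 0 /\ 2 * a1 ^+ 2 - 1 = cos eps.
Proof.
move=> Hsu [rho [[_ [_ Htr]] Hb]].
have [E11 E01 En] := su2_form Hsu.
pose v1 := vec2 (1 +i* 0)%C (1 +i* 0)%C.
pose v2 := vec2 (1 +i* 0)%C (0 +i* 1)%C.
pose v3 := vec2 (1 +i* 0)%C (0 +i* 0)%C.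
have nz1 : (1 +i* 0)%C != 0 :> C by rewrite oner_eq0.
have B1 : bloch v1 = delta_mx 0 0.
  apply/matrixP => i j; rewrite !mxE /= (ord1 j) /=.
  by case: i => [[|[|[|i]]] Hi] //=; simpc; field.
have B2 : bloch v2 = delta_mx 1 0.
  apply/matrixP => i j; rewrite !mxE /= (ord1 j) /=.
  by case: i => [[|[|[|i]]] Hi] //=; simpc; field.
have B3 : bloch v3 = delta_mx 2%:R 0.
  apply/matrixP => i j; rewrite !mxE /= (ord1 j) /=.
  by case: i => [[|[|[|i]]] Hi] //=; simpc; field.
have R1 := Hb v1 (vec2_neq0 _ nz1); rewrite B1 in R1.
have R2 := Hb v2 (vec2_neq0 _ nz1); rewrite B2 in R2.
have R3 := Hb v3 (vec2_neq0 _ nz1); rewrite B3 in R3.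
have T : \tr rho = bloch (g *m v1) 0 0 + bloch (g *m v2) 1 0 + bloch (g *m v3) 2%:R 0.
  by rewrite R1 R2 R3 !rho_diag /mxtrace sum3.
move: T; rewrite /v1 /v2 /v3 !mulmx_vec2' E11 E01 !bloch_vec2 !mxE /=.
move: En.
case: (g 0 0) => a1 a2; case: (g 1 0) => b1 b2.
simpc => En T.
move/(congr1 (@complex.Re R)): En => /= En.
rewrite /= Htr in T.
exists a1; split; first by congr (Complex _ _); ring.
move: T.
match goal with |- _ = 2 * ?X1 / ?D1 + 2 * ?X2 / ?D2 + ?X3 / ?D3 -> _ =>
  rewrite (_ : D1 = 2 * (a1 * a1 + a2 * a2 + (b1 * b1 + b2 * b2))); last ring;
  rewrite (_ : D2 = 2 * (a1 * a1 + a2 * a2 + (b1 * b1 + b2 * b2))); last ring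
end.
move=> T; apply: (trace_aux En _ T); ring.
Qed.

Lemma t_facts (eps a : R) : 0 < eps < pi / 2 -> 2 * a ^+ 2 - 1 = cos eps ->
  (Complex (2 * a) 0 : C) != 0 /\ (Complex (2 * a) 0 : C) ^+ 2 != 4.
Proof.
case/andP => e0 e1 Hc.
have pi0 := pi_gt0 R.
have hc : 0 < cos eps by apply: cos_gt0_pihalf; apply/andP; split => //; lra.
have hs : 0 < sin eps by apply: sin_gt0_pihalf; apply/andP.
have cs := cos2Dsin2 eps.
split; apply/negP => /eqP H.
  move/(congr1 (@complex.Re R)): H => /= H.
  by move: hc; rewrite -Hc; nra.
have E4 : (4 : C) = Complex 4 0.
  by rewrite -(rmorph_nat (@real_complex_def R (Phant R))).
move: H; rewrite E4 expr2; simpc => H.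
move/(congr1 (@complex.Re R)): H => /= H.
have a1 : a ^+ 2 = 1 by move: H; nra.
move: Hc; rewrite a1 => Hc.
have : sin eps ^+ 2 = 0 by rewrite -Hc in cs; nra.
move/eqP; rewrite expf_eq0 /= => /eqP hs0.
by move: hs; rewrite hs0 ltxx.
Qed.

Lemma su2_t (g : 'M[C]_2) eps : 0 < eps < pi / 2 -> is_SU2 g -> lifts_rotation_by g eps ->
  g 0 0 + g 1 1 != 0 /\ (g 0 0 + g 1 1) ^+ 2 != 4.
Proof.
move=> He Hs Hl; have [a [-> Hc]] := su2_trace Hs Hl.
exact: t_facts He Hc.
Qed.
End SU2.


Lemma coef_lin_mul (F : comNzRingType) (q : {poly F}) r i :
  (('X - r%:P) * q)`_i = (if i is i'.+1 then q`_i' else 0) - r * q`_i.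
Proof. by rewrite mulrBl coefB coefXM coefCM; case: i. Qed.

Section Geo.
Variable R : realType.
Local Notation C := (R[i]).

Definition mM (g : 'M[C]_2) : nat -> C := fun k => nth 0 [:: g 1 1; - g 1 0; - g 0 1; g 0 0] k.
Definition Mapp (m : nat -> C) (l : C * C) : C * C :=
  (m 0%N * l.1 + m 1%N * l.2, m 2%N * l.1 + m 3%N * l.2).
Definition FF (g : 'M[C]_2) (w : 'cV[C]_4) : C := Fg (mM g) (fun k => w (inord k) 0).

Lemma cubic3_cw (l1 l2 l3 : C * C) k : (k < 4)%N -> cubic3 l1 l2 l3 (inord k) 0 = cw l1 l2 l3 k.
Proof.
case: l1 l2 l3 => [x1 y1] [x2 y2] [x3 y3] Hk.
by rewrite /cubic3 /cw mxE inordK.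
Qed.

Lemma FF_cubic g (l1 l2 l3 : C * C) : FF g (cubic3 l1 l2 l3) =
  beta (mM g) l1 l2 * beta (mM g) l2 l1 * beta (mM g) l1 l3 * beta (mM g) l3 l1 *
  beta (mM g) l2 l3 * beta (mM g) l3 l2.
Proof.
rewrite /FF -Fg_cubic; apply: Fg_ext => // k Hk; exact: cubic3_cw.
Qed.

Lemma beta_M (m : nat -> C) (l : C * C) : beta m l (Mapp m l) = 0.
Proof. by rewrite /beta /Mapp /=; ring. Qed.

Lemma linform_g g a : linform (g *m a) = Mapp (mM g) (linform a).
Proof.
rewrite /linform /Mapp /mM /= !mxE !sum2.
congr (_, _); ring.
Qed.

Lemma Ups_FF g w : Upsilon g w -> FF g w = 0.
Proof.
case=> a [b [_ [_ ->]]]; rewrite FF_cubic linform_g beta_M.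
by rewrite !mul0r.
Qed.

Lemma linform_vec2 (x y : C) : linform (vec2 x y) = (y, - x).
Proof. by rewrite /linform !mxE. Qed.

Lemma vec2_neq0' (x y : C) : (x, y) != (0, 0) -> vec2 x y != 0.
Proof.
move=> H; apply/negP => /eqP /matrixP E.
move: (E 0 0) (E 1 0); rewrite !mxE /= => ex ey.
by move: H; rewrite ex ey eqxx.
Qed.

Ltac cubic_eq := apply/matrixP; let i := fresh "i" in let j := fresh "j" in
  move=> i j; rewrite !mxE; case: i => [[|[|[|[|?]]]] ?] //=; ring.

Lemma cubic3_12 (l1 l2 l3 : C * C) : cubic3 l1 l2 l3 = cubic3 l2 l1 l3.
Proof. case: l1 l2 l3 => [x1 y1] [x2 y2] [x3 y3]; rewrite /cubic3; cubic_eq. Qed.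
Lemma cubic3_23 (l1 l2 l3 : C * C) : cubic3 l1 l2 l3 = cubic3 l1 l3 l2.
Proof. case: l1 l2 l3 => [x1 y1] [x2 y2] [x3 y3]; rewrite /cubic3; cubic_eq. Qed.

Lemma Mapp_neq0 g (l : C * C) : \det g = 1 -> l != (0, 0) -> Mapp (mM g) l != (0, 0).
Proof.
rewrite det2 => D; case: l => x y Hl; apply/negP; rewrite /Mapp /= => /eqP [E1 E2].
have ex : x = mM g 3 * (mM g 0 * x + mM g 1 * y) - mM g 1 * (mM g 2 * x + mM g 3 * y).
  by rewrite /mM /= -[x in LHS]mul1r -D; ring.
have ey : y = mM g 0 * (mM g 2 * x + mM g 3 * y) - mM g 2 * (mM g 0 * x + mM g 1 * y).
  by rewrite /mM /= -[y in LHS]mul1r -D; ring.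
rewrite E1 E2 !mulr0 subr0 in ex ey.
by move: Hl; rewrite ex ey eqxx.
Qed.

Lemma beta_prop (m : nat -> C) (l l' : C * C) : Mapp m l != (0, 0) -> l' != (0, 0) -> beta m l l' = 0 ->
  exists k, k != 0 /\ l' = (k * (Mapp m l).1, k * (Mapp m l).2).
Proof.
have -> : beta m l l' = l'.1 * (Mapp m l).2 - l'.2 * (Mapp m l).1 by [].
case: (Mapp m l) => u1 u2 /= Hu; case: l' => x y Hl /eqP.
rewrite subr_eq0 /= => /eqP E.
have [u10 | u1n0] := eqVneq u1 0.
  have u2n0 : u2 != 0 by apply: contraNneq Hu => u20; rewrite u10 u20.
  have x0 : x = 0.
    by move/eqP: E; rewrite u10 mulr0 mulf_eq0 (negPf u2n0) orbF => /eqP.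
  have y0 : y != 0 by apply: contraNneq Hl => ->; rewrite x0.
  exists (y / u2); split; first by rewrite mulf_eq0 invr_eq0 negb_or y0 u2n0.
  by rewrite u10 mulr0 x0 divfK.
have x0 : x != 0.
  apply: contraNneq Hl => x0; move/eqP: E; rewrite x0 mul0r eq_sym mulf_eq0 (negPf u1n0) orbF.
  by move/eqP => ->.
exists (x / u1); split; first by rewrite mulf_eq0 invr_eq0 negb_or x0 u1n0.
congr (_, _); first by rewrite divfK.
by apply: (mulIf u1n0); rewrite -E mulrAC divfK.
Qed.

Lemma ups_of g (li lj lo : C * C) k : li != (0, 0) -> lo != (0, 0) -> k != 0 ->
  lj = (k * (Mapp (mM g) li).1, k * (Mapp (mM g) li).2) -> Upsilon g (cubic3 li lj lo).
Proof.
case: li => x1 y1; case: lo => x3 y3 H1 H3 Hk ->.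
exists (vec2 (- y1) x1), (vec2 (- (k * y3)) (k * x3)).
split.
  apply: vec2_neq0'; apply: contraNneq H1 => [[E1 E2]].
  by move/eqP: E1; rewrite oppr_eq0 => /eqP ->; rewrite E2.
split.
  apply: vec2_neq0'; apply: contraNneq H3 => [[E1 E2]].
  move/eqP: E1; rewrite oppr_eq0 mulf_eq0 (negPf Hk) /= => /eqP ->.
  by move/eqP: E2; rewrite mulf_eq0 (negPf Hk) /= => /eqP ->.
rewrite linform_g !linform_vec2 !opprK /Mapp /cubic3 /=.
cubic_eq.
Qed.

Lemma cubic_factor (w : 'cV[C]_4) : w != 0 -> exists l1 l2 l3 : C * C,
  [/\ l1 != (0, 0), l2 != (0, 0), l3 != (0, 0) & w = cubic3 l1 l2 l3].
Proof.
move=> Hw.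
pose p : {poly C} := \poly_(i < 4) w (inord (3 - i)) 0.
have Hc k : (k < 4)%N -> w (inord (3 - k)) 0 = p`_k by move=> Hk; rewrite coef_poly Hk.
have Hp0 : p != 0.
  apply: contraNneq Hw => p0; apply/eqP/matrixP => i j; rewrite (ord1 j) mxE.
  have Hi : (3 - i < 4)%N by lia.
  have := Hc _ Hi; rewrite p0 coef0 => <-; congr (w _ _); apply: val_inj.
  have := ltn_ord i; rewrite /= inordK; lia.
have [rs Hrs] := closed_field_poly_normal p.
have lc0 : lead_coef p != 0 by rewrite lead_coef_eq0.
have szp : size p = (size rs).+1 by rewrite Hrs size_scale // size_prod_XsubC.
have sz4 : (size p <= 4)%N by exact: size_poly.
set lc := lead_coef p in Hrs lc0.
have one0 : (1 : C) != 0 by rewrite oner_eq0.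
have Hv : ((0 : C), (1 : C)) != (0, 0) by rewrite xpair_eqE (negPf one0) andbF.
have pair_nz (a b : C) : a != 0 -> (a, b) != (0, 0).
  by move=> Ha; rewrite xpair_eqE (negPf Ha).
have pair_nz2 (a b : C) : b != 0 -> (a, b) != (0, 0).
  by move=> Hb; rewrite xpair_eqE (negPf Hb) andbF.
case: rs Hrs szp => [|r1 [|r2 [|r3 [|r4 rs]]]] Hrs szp; rewrite ?szp in sz4 => //.
- exists (0, 1), (0, 1), (0, lc); split; try exact: pair_nz2.
  apply/matrixP => i j; rewrite (ord1 j) /cubic3 mxE.
  case: i => [[|[|[|[|i]]]] Hi] //=; [pose k := 3%N | pose k := 2%N | pose k := 1%N | pose k := 0%N];
  (have := Hc k isT; rewrite (_ : inord (3 - k) = Ordinal Hi);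
   [ rewrite Hrs coefZ ?big_cons ?big_nil; do 4 rewrite ?coef_lin_mul ?coef1 /=; move=> ->; ring
   | apply: val_inj; rewrite /= inordK //]).
- exists (0, 1), (0, 1), (lc, - lc * r1); split; try exact: pair_nz2; try exact: pair_nz.
  apply/matrixP => i j; rewrite (ord1 j) /cubic3 mxE.
  case: i => [[|[|[|[|i]]]] Hi] //=; [pose k := 3%N | pose k := 2%N | pose k := 1%N | pose k := 0%N];
  (have := Hc k isT; rewrite (_ : inord (3 - k) = Ordinal Hi);
   [ rewrite Hrs coefZ ?big_cons ?big_nil; do 4 rewrite ?coef_lin_mul ?coef1 /=; move=> ->; ring
   | apply: val_inj; rewrite /= inordK //]).
- exists (0, 1), (lc, - lc * r1), (1, - r2); split; try exact: pair_nz2; try exact: pair_nz.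
  apply/matrixP => i j; rewrite (ord1 j) /cubic3 mxE.
  case: i => [[|[|[|[|i]]]] Hi] //=; [pose k := 3%N | pose k := 2%N | pose k := 1%N | pose k := 0%N];
  (have := Hc k isT; rewrite (_ : inord (3 - k) = Ordinal Hi);
   [ rewrite Hrs coefZ ?big_cons ?big_nil; do 4 rewrite ?coef_lin_mul ?coef1 /=; move=> ->; ring
   | apply: val_inj; rewrite /= inordK //]).
- exists (lc, - lc * r1), (1, - r2), (1, - r3); split; try exact: pair_nz2; try exact: pair_nz.
  apply/matrixP => i j; rewrite (ord1 j) /cubic3 mxE.
  case: i => [[|[|[|[|i]]]] Hi] //=; [pose k := 3%N | pose k := 2%N | pose k := 1%N | pose k := 0%N];
  (have := Hc k isT; rewrite (_ : inord (3 - k) = Ordinal Hi);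
   [ rewrite Hrs coefZ ?big_cons ?big_nil; do 4 rewrite ?coef_lin_mul ?coef1 /=; move=> ->; ring
   | apply: val_inj; rewrite /= inordK //]).
Qed.


Lemma FF_Ups (g : 'M[C]_2) w : \det g = 1 -> w != 0 -> FF g w = 0 -> Upsilon g w.
Proof.
move=> D Hw; have [l1 [l2 [l3 [H1 H2 H3 ->]]]] := cubic_factor Hw.
have key (li lj lo : C * C) : li != (0, 0) -> lj != (0, 0) -> lo != (0, 0) ->
    beta (mM g) li lj = 0 -> Upsilon g (cubic3 li lj lo).
  move=> Hi Hj Ho Hb; have [k [Hk E]] := beta_prop (Mapp_neq0 D Hi) Hj Hb.
  exact: ups_of Hi Ho Hk E.
rewrite FF_cubic => /eqP.
rewrite !mulf_eq0 => /orP[/orP[/orP[/orP[/orP[]|]|]|]|] /eqP Hb.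
- exact: key.
- by rewrite cubic3_12; apply: key.
- by rewrite cubic3_23; apply: key.
- by rewrite cubic3_23 cubic3_12; apply: key.
- by rewrite cubic3_12 cubic3_23; apply: key.
- by rewrite cubic3_23 cubic3_12 cubic3_23; apply: key.
Qed.
End Geo.


Section Line.
Variable R : realType.
Local Notation C := (R[i]).

Definition fC (g : 'M[C]_2) (p q : 'cV[C]_4) : {poly C} :=
  Fg (fun k => (mM g k)%:P) (fun k => 'X * (p (inord k) 0)%:P + (q (inord k) 0)%:P).

Lemma fC_horner (g : 'M[C]_2) (p q : 'cV[C]_4) (s : C) : (fC g p q).[s] = FF g (s *: p + q).
Proof.
rewrite -horner_evalE /fC Fg_morph /FF; apply: Fg_ext => [k|k _].
  exact: hornerC.
rewrite !mxE; rewrite -[RHS](_ : ('X * (p (inord k) 0)%:P + (q (inord k) 0)%:P).[s] = _) //.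
by rewrite hornerD hornerM hornerX !hornerC.
Qed.

Lemma fC_coef g p q : (forall j, (4 < j)%N -> (fC g p q)`_j = 0) /\ (fC g p q)`_4 = FF g p.
Proof. exact: (FgL_poly (fun k => p (inord k) 0) (fun k => q (inord k) 0) (mM g) FL_size4). Qed.

Lemma fC_size g p q : FF g p != 0 -> (size (fC g p q) = 5)%N.
Proof.
move=> Fp; have [H1 H2] := fC_coef g p q.
apply/eqP; rewrite eqn_leq; apply/andP; split.
  by apply/leq_sizeP => j Hj; apply: H1.
rewrite ltnNge; apply/negP => H.
by move: Fp; rewrite -H2 (leq_sizeP _ _ H) ?eqxx.
Qed.

Lemma fC_deriv_size g p q : FF g p != 0 -> (size (fC g p q)^`() = 4)%N.
Proof.
move=> Fp; have [H1 H2] := fC_coef g p q.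
apply/eqP; rewrite eqn_leq; apply/andP; split.
  by apply/leq_sizeP => j Hj; rewrite coef_deriv H1 ?mul0rn.
rewrite ltnNge; apply/negP => H.
have := leq_sizeP _ _ H 3%N (leqnn 3); rewrite coef_deriv H2 => /eqP.
by rewrite mulrn_eq0 /= (negPf Fp).
Qed.

Lemma FF_scale (g : 'M[C]_2) (c : C) (w : 'cV[C]_4) : FF g (c *: w) = c ^+ 4 * FF g w.
Proof. by rewrite /FF -Fg_homog; apply: Fg_ext => // k _; rewrite mxE. Qed.

Lemma FF0 (g : 'M[C]_2) : FF g 0 = 0.
Proof. by rewrite -(scale0r 0) FF_scale expr0n mul0r. Qed.

Lemma line_count (g : 'M[C]_2) (p q : 'cV[C]_4) : \det g = 1 -> FF g p != 0 -> coprimep (fC g p q) (fC g p q)^`() ->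
  proj_card (fun w => on_line p q w /\ Upsilon g w) 4.
Proof.
move=> D Fp cop.
have [rs [sz u Hroot]] := four_roots (fC_size q Fp) cop.
have p0 : p != 0 by apply: contraNneq Fp => ->; rewrite FF0.
have rootE x : root (fC g p q) x = (FF g (x *: p + q) == 0) by rewrite /root fC_horner.
have indep s t : s *: p + t *: q = 0 -> s = 0 /\ t = 0.
  move=> E; have [t0|tn0] := eqVneq t 0.
    move: E; rewrite t0 scale0r addr0 => /eqP; rewrite scaler_eq0 (negPf p0) orbF => /eqP.
    by [].
  exfalso.
  have Eq : q = (- (s / t)) *: p.
    have E1 : t *: q = - (s *: p) by apply/eqP; rewrite -addr_eq0 addrC E.
    by rewrite -[q]scale1r -(mulVf tn0) -scalerA E1 scalerN scalerA scaleNr mulrC.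
  have allr x : root (fC g p q) x -> x = s / t.
    rewrite rootE Eq -scalerDl FF_scale mulf_eq0 (negPf Fp) orbF expf_eq0 /=.
    by rewrite subr_eq0 => /eqP.
  have h0 : root (fC g p q) (nth 0 rs 0) by rewrite Hroot mem_nth // sz.
  have h1 : root (fC g p q) (nth 0 rs 1) by rewrite Hroot mem_nth // sz.
  have := nth_uniq 0 (_ : (0 < size rs)%N) (_ : (1 < size rs)%N) u.
  by rewrite sz (allr _ h0) (allr _ h1) eqxx => /(_ isT isT).
pose f (i : 'I_4) := nth 0 rs i *: p + q.
have fi0 i : f i != 0.
  apply/negP; rewrite /f => /eqP E; have := indep (nth 0 rs i) 1; rewrite scale1r E => /(_ erefl) [_ /eqP].
  by rewrite oner_eq0.
exists f; split; [|split].
- move=> i; split; first exact: fi0.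
  split; first by exists (nth 0 rs i), 1; rewrite scale1r.
  refine (@FF_Ups R g (f i) D (fi0 i) _).
  have Hr : root (fC g p q) (nth 0 rs i) by rewrite Hroot mem_nth // sz ltn_ord.
  by rewrite rootE in Hr; apply/eqP.
- move=> i j [c [c0 E]].
  have := indep (nth 0 rs j - c * nth 0 rs i) (1 - c).
  case.
    have -> : (nth 0 rs j - c * nth 0 rs i) *: p + (1 - c) *: q =
      (nth 0 rs j *: p + q) - c *: (nth 0 rs i *: p + q).
      by rewrite scalerDr scalerA !scalerBl scale1r opprD addrACA.
    by rewrite /f in E; rewrite -E subrr.
  move=> /eqP h1 /eqP h2; move: h2 h1; rewrite subr_eq0 => /eqP <-; rewrite mul1r subr_eq0.
  rewrite nth_uniq ?sz // => /eqP ij; exact/val_inj.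
- move=> w w0 [[s [t Ew]] Uw]; have Fw := Ups_FF Uw.
  have [t0|tn0] := eqVneq t 0.
    move: Fw; rewrite Ew t0 scale0r addr0 FF_scale => /eqP.
    rewrite mulf_eq0 (negPf Fp) orbF expf_eq0 /= => /eqP s0.
    by move: w0; rewrite Ew s0 t0 !scale0r addr0 eqxx.
  have Hr : root (fC g p q) (s / t).
    rewrite rootE; move: Fw.
    have -> : w = t *: ((s / t) *: p + q) by rewrite Ew scalerDr scalerA mulrC divfK.
    by rewrite FF_scale => /eqP; rewrite mulf_eq0 expf_eq0 /= (negPf tn0).
  rewrite Hroot in Hr.
  have Hi : (index (s / t) rs < 4)%N by rewrite -sz index_mem.
  exists (Ordinal Hi), t; split => //.
  by rewrite /f /= nth_index // Ew scalerDr scalerA mulrC divfK.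
Qed.

End Line.


Section MP.
Variable R : realType.
Local Notation C := (R[i]).
Local Notation MP := {mpoly C[8]}.

Definition pvar (k : nat) : MP := 'X_(inord k).
Definition qvar (k : nat) : MP := 'X_(inord (4 + k)).
Definition fs (g : 'M[C]_2) : {poly MP} :=
  Fg (fun k => ((mM g k)%:MP)%:P) (fun k => 'X * (pvar k)%:P + (qvar k)%:P).
Definition Pmp (g : 'M[C]_2) : MP :=
  Fg (fun k => (mM g k)%:MP) pvar * \det (Sylv (fs g) (fs g)^`()).

Lemma pq_p (p q : 'cV[C]_4) k : (k < 4)%N -> pq_coords p q (inord k) = p (inord k) 0.
Proof. by move=> Hk; rewrite /pq_coords inordK ?Hk //; lia. Qed.

Lemma pq_q (p q : 'cV[C]_4) k : (k < 4)%N -> pq_coords p q (inord (4 + k)) = q (inord k) 0.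
Proof.
move=> Hk; rewrite /pq_coords inordK; last by lia.
by rewrite (_ : (4 + k < 4)%N = false) ?addKn //; lia.
Qed.

Lemma fs_map g p q : map_poly (meval (pq_coords p q)) (fs g) = fC g p q.
Proof.
rewrite /fs Fg_morph /fC; apply: Fg_ext => [k|k Hk].
  rewrite /= map_polyC; exact: (congr1 (fun x => x%:P) (mevalC _ _)).
rewrite /= rmorphD rmorphM /= map_polyX !map_polyC /= !mevalXU.
by rewrite pq_p // pq_q.
Qed.

Lemma Pmp_eval g p q : (Pmp g).@[pq_coords p q] =
  FF g p * \det (Sylv (fC g p q) (fC g p q)^`()).
Proof.
rewrite /Pmp mevalM; congr (_ * _).
  rewrite Fg_morph /FF; apply: Fg_ext => [k|k Hk]; first exact: mevalC.
  by rewrite /pvar -(pq_p p q Hk); exact: mevalXU.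
rewrite -det_map_mx; congr (\det _); apply/matrixP => i j; rewrite !mxE.
have Hm : map_poly (meval (pq_coords p q)) (fs g) = fC g p q := fs_map g p q.
case: ifP => _; rewrite rmorphMn -coef_map.
  by rewrite Hm.
by rewrite -deriv_map Hm.
Qed.

Lemma Pmp_good g p q : \det g = 1 -> (Pmp g).@[pq_coords p q] != 0 ->
  proj_card (fun w => on_line p q w /\ Upsilon g w) 4.
Proof.
move=> D; rewrite Pmp_eval mulf_eq0 negb_or => /andP [Fp Hd].
apply: line_count => //.
have s5 := fC_size q Fp; have s4 := fC_deriv_size q Fp.
have f0 : fC g p q != 0 by rewrite -size_poly_eq0 s5.
have := res_coprime (fC g p q)^`() f0; rewrite (Sylv_res s5 s4) Hd => /esym H; exact: H.
Qed.

Lemma Pmp_neq0 g p q : FF g p != 0 -> coprimep (fC g p q) (fC g p q)^`() -> Pmp g != 0.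
Proof.
move=> Fp cop; apply/negP => /eqP P0.
have : (Pmp g).@[pq_coords p q] = 0 by rewrite P0 meval0.
rewrite Pmp_eval -Sylv_res ?fC_size ?fC_deriv_size // => /eqP.
have f0 : fC g p q != 0 by rewrite -size_poly_eq0 fC_size.
have := res_coprime (fC g p q)^`() f0; rewrite mulf_eq0 (negPf Fp) /=.
move=> E R0; move: E; rewrite R0 /= => E.
by move: cop; rewrite -E.
Qed.

End MP.


Lemma coprime_of_roots (F : closedFieldType) (f : {poly F}) (xs : seq F) :
  (size f = 5)%N -> uniq xs -> (size xs = 4)%N -> all (root f) xs -> coprimep f f^`().
Proof.
move=> sf uxs sxs rxs; have [rs Hrs] := closed_field_poly_normal f.
have f0 : f != 0 by rewrite -size_poly_eq0 sf.
have lc0 : lead_coef f != 0 by rewrite lead_coef_eq0.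
have srs : (size rs = 4)%N.
  by move: sf; rewrite Hrs size_scale // size_prod_XsubC => -[].
have urs : uniq rs.
  apply: (leq_size_uniq uxs); last by rewrite srs sxs.
  move=> x /(allP rxs); by rewrite Hrs rootZ // root_prod_XsubC.
rewrite Hrs derivZ coprimepZl // coprimepZr //.
by move: urs; rewrite -separable_prod_XsubC unlock.
Qed.

Lemma avoid_nat (F : numDomainType) (s : seq F) : exists n : nat, (n%:R : F) \notin s.
Proof.
pose l := [seq (n%:R : F) | n <- iota 0 (size s).+1].
have ul : uniq l.
  rewrite map_inj_uniq ?iota_uniq // => m n /eqP; rewrite eqr_nat => /eqP.
  by [].
have : ~~ all (mem s) l.
  apply/negP => /allP sub.
  have := uniq_leq_size ul sub; rewrite size_map size_iota ltnn.
  by [].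
case/allPn => x /mapP [n _ ->] Hn; by exists n.
Qed.

Ltac cubic_eq2 := apply/matrixP; let i := fresh "i" in let j := fresh "j" in
  move=> i j; rewrite !mxE; case: i => [[|[|[|[|?]]]] ?] //=; ring.

Section Wit.
Variable R : realType.
Local Notation C := (R[i]).

Lemma eigen2 (g : 'M[C]_2) : \det g = 1 -> g 0 0 + g 1 1 != 0 -> (g 0 0 + g 1 1) ^+ 2 != 4 ->
  exists n1 n2 : C, exists e1 e2 : C * C,
  [/\ n1 * n2 = 1, n1 ^+ 2 != n2 ^+ 2,
      Mapp (mM g) e1 = (n1 * e1.1, n1 * e1.2), Mapp (mM g) e2 = (n2 * e2.1, n2 * e2.2)
    & e2.1 * e1.2 - e2.2 * e1.1 != 0].
Proof.
rewrite det2 => D t0 t4.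
set t := g 0 0 + g 1 1 in t0 t4.
set a := g 1 1; set b := - g 1 0; set c := - g 0 1; set d := g 0 0.
have Mdef (l : C * C) : Mapp (mM g) l = (a * l.1 + b * l.2, c * l.1 + d * l.2) by [].
have Dd : a * d - b * c = 1 by rewrite /a /b /c /d -D; ring.
have td : t = a + d by rewrite /t /a /d addrC.
pose s := sqrtC (t ^+ 2 - 4).
have s2 : s ^+ 2 = t ^+ 2 - 4 by rewrite /s sqrtCK.
have s0 : s != 0.
  by apply: contra t4 => /eqP s0; move: s2; rewrite s0 expr0n /= => /eqP; rewrite eq_sym subr_eq0.
pose n1 := (t + s) / 2; pose n2 := (t - s) / 2.
have h12 : n1 * n2 = 1.
  rewrite /n1 /n2 (_ : (t + s) / 2 * ((t - s) / 2) = (t ^+ 2 - s ^+ 2) / 4); last by field.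
  by rewrite s2; field.
have hsum : n1 + n2 = t by rewrite /n1 /n2; field.
have hsq : n1 ^+ 2 != n2 ^+ 2.
  rewrite -subr_eq0 (_ : n1 ^+ 2 - n2 ^+ 2 = t * s); last by rewrite /n1 /n2; field.
  by rewrite mulf_eq0 negb_or t0 s0.
have hdiff : n1 - n2 = s by rewrite /n1 /n2; field.
have quad (n : C) : n1 + n2 = t -> n * (n1 + n2 - n) = 1 -> n ^+ 2 - t * n + 1 = 0.
  by move=> Ht Hn; rewrite -Ht -Hn; ring.
have q1 : n1 ^+ 2 - t * n1 + 1 = 0.
  by apply: quad => //; rewrite (_ : n1 + n2 - n1 = n2); [exact: h12 | ring].
have q2 : n2 ^+ 2 - t * n2 + 1 = 0.
  by apply: quad => //; rewrite (_ : n1 + n2 - n2 = n1); [rewrite mulrC; exact: h12 | ring].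
have [b0|bn0] := eqVneq b 0.
  have [c0|cn0] := eqVneq c 0.
    have ad : a * d = 1 by rewrite -Dd b0 mul0r subr0.
    exists a, d, (1, 0), (0, 1); split => //.
    - rewrite -subr_eq0 (_ : a ^+ 2 - d ^+ 2 = (a - d) * t); last by rewrite td; ring.
      rewrite mulf_eq0 negb_or t0 andbT; apply: contra t4 => /eqP ad0.
      have -> : t ^+ 2 = (a - d) ^+ 2 + 4 * (a * d) by rewrite td; ring.
      by rewrite ad0 ad; apply/eqP; ring.
    - by rewrite Mdef /= b0 c0; congr (_, _); ring.
    - by rewrite Mdef /= b0 c0; congr (_, _); ring.
    - by rewrite /= mul0r mulr1 sub0r oppr_eq0 oner_eq0.
  exists n1, n2, (n1 - d, c), (n2 - d, c); split => //.
  - rewrite Mdef /= b0; congr (_, _); last by ring.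
    have ad : a * d = 1 by rewrite -Dd b0 mul0r subr0.
    apply/eqP; rewrite -subr_eq0; apply/eqP.
    rewrite (_ : a * (n1 - d) + 0 * c - n1 * (n1 - d) = - (n1 ^+ 2 - t * n1 + a * d)); last by rewrite td; ring.
    by rewrite ad q1 oppr0.
  - rewrite Mdef /= b0; congr (_, _); last by ring.
    have ad : a * d = 1 by rewrite -Dd b0 mul0r subr0.
    apply/eqP; rewrite -subr_eq0; apply/eqP.
    rewrite (_ : a * (n2 - d) + 0 * c - n2 * (n2 - d) = - (n2 ^+ 2 - t * n2 + a * d)); last by rewrite td; ring.
    by rewrite ad q2 oppr0.
  - rewrite /= (_ : (n2 - d) * c - c * (n1 - d) = - (c * (n1 - n2))); last by ring.
    by rewrite oppr_eq0 hdiff mulf_eq0 negb_or cn0 s0.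
exists n1, n2, (b, n1 - a), (b, n2 - a); split => //.
- rewrite Mdef /=; congr (_, _); first by ring.
  apply/eqP; rewrite -subr_eq0; apply/eqP.
  rewrite (_ : c * b + d * (n1 - a) - n1 * (n1 - a) = - (n1 ^+ 2 - t * n1 + (a * d - b * c))); last by rewrite td; ring.
  by rewrite Dd q1 oppr0.
- rewrite Mdef /=; congr (_, _); first by ring.
  apply/eqP; rewrite -subr_eq0; apply/eqP.
  rewrite (_ : c * b + d * (n2 - a) - n2 * (n2 - a) = - (n2 ^+ 2 - t * n2 + (a * d - b * c))); last by rewrite td; ring.
  by rewrite Dd q2 oppr0.
- rewrite /= (_ : b * (n1 - a) - (n2 - a) * b = b * (n1 - n2)); last by ring.
  by rewrite hdiff mulf_eq0 negb_or bn0 s0.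
Qed.


Lemma witness (g : 'M[C]_2) : \det g = 1 -> g 0 0 + g 1 1 != 0 -> (g 0 0 + g 1 1) ^+ 2 != 4 ->
  exists p q : 'cV[C]_4, FF g p != 0 /\ coprimep (fC g p q) (fC g p q)^`().
Proof.
move=> D t0 t4; have [n1 [n2 [[e11 e12] [[e21 e22] [h12 hsq E1 E2 hd]]]]] := eigen2 D t0 t4.
rewrite /= in E1 E2 hd.
set dd := e21 * e12 - e22 * e11 in hd.
pose comb (x1 x2 : C) : C * C := (x1 * e11 + x2 * e21, x1 * e12 + x2 * e22).
have beig x1 x2 y1 y2 : beta (mM g) (comb x1 x2) (comb y1 y2) = dd * (n1 * x1 * y2 - n2 * x2 * y1).
  have -> : beta (mM g) (comb x1 x2) (comb y1 y2) =
    (comb y1 y2).1 * (Mapp (mM g) (comb x1 x2)).2 - (comb y1 y2).2 * (Mapp (mM g) (comb x1 x2)).1 by [].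
  have -> : Mapp (mM g) (comb x1 x2) = (x1 * (n1 * e11) + x2 * (n2 * e21), x1 * (n1 * e12) + x2 * (n2 * e22)).
    have L : Mapp (mM g) (comb x1 x2) =
      (x1 * (Mapp (mM g) (e11, e12)).1 + x2 * (Mapp (mM g) (e21, e22)).1,
       x1 * (Mapp (mM g) (e11, e12)).2 + x2 * (Mapp (mM g) (e21, e22)).2).
      by rewrite /Mapp /=; congr (_, _); ring.
    by rewrite L E1 E2.
  by rewrite /comb /dd /=; ring.
have nn1 : n1 != 0 by apply/eqP => n10; move: h12; rewrite n10 mul0r => /eqP; rewrite eq_sym oner_eq0.
have nn2 : n2 != 0 by apply/eqP => n20; move: h12; rewrite n20 mulr0 => /eqP; rewrite eq_sym oner_eq0.
have [k Hk] := avoid_nat [:: 0; 1; n1 ^+ 2; n2 ^+ 2; n1 ^+ 4; n2 ^+ 4].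
set b : C := k%:R in Hk.
move: Hk; rewrite !inE !negb_or.
move=> /andP [bn0 /andP [bn1 /andP [bnA /andP [bnB /andP [bnA4 bnB4]]]]].
pose pA := comb 1 1; pose pB := comb 1 b; pose pP := comb 1 0; pose pQ := comb 0 1.
have Fp : FF g (cubic3 pA pB pP) != 0.
  rewrite FF_cubic !beig.
  have f1 : n1 * 1 * b - n2 * 1 * 1 != 0.
    apply: contra bnB => /eqP E; apply/eqP.
    have E' : n1 * b = n2 by move/eqP: E; rewrite !mulr1 subr_eq0 => /eqP.
    by rewrite -[b]mul1r -h12 (mulrC n1) -mulrA E' expr2.
  have f2 : n1 * 1 * 1 - n2 * b * 1 != 0.
    apply: contra bnA => /eqP E; apply/eqP.
    have E' : n2 * b = n1 by move/eqP: E; rewrite !mulr1 subr_eq0 => /eqP.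
    by rewrite -[b]mul1r -h12 -mulrA E' expr2.
  have f3 : n1 * 1 * 0 - n2 * 1 * 1 != 0 by rewrite mulr0 sub0r oppr_eq0 !mulr1.
  have f4 : n1 * 1 * 1 - n2 * 0 * 1 != 0 by rewrite mulr0 mul0r subr0 !mulr1.
  have f5 : n1 * 1 * 0 - n2 * b * 1 != 0 by rewrite mulr0 sub0r oppr_eq0 mulr1 mulf_neq0.
  have f6 : n1 * 1 * b - n2 * 0 * 1 != 0 by rewrite mulr0 mul0r subr0 mulr1 mulf_neq0.
  by rewrite !mulf_neq0.
exists (cubic3 pA pB pP), (cubic3 pA pB pQ); split => //.
have L3 x : x *: cubic3 pA pB pP + cubic3 pA pB pQ = cubic3 pA pB (comb x 1).
  rewrite /pA /pB /pP /pQ /comb /cubic3 /=; cubic_eq2.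
have rootX x : root (fC g (cubic3 pA pB pP) (cubic3 pA pB pQ)) x =
   (FF g (cubic3 pA pB (comb x 1)) == 0) by rewrite /root fC_horner L3.
apply: (coprime_of_roots (xs := [:: n1 ^+ 2; n2 ^+ 2; n1 ^+ 2 / b; n2 ^+ 2 / b])).
- exact: fC_size.
- have key (u v X : C) : (u * b = v -> b = X) -> b != X -> u != v / b.
    move=> H hX; apply: contra hX => /eqP E; apply/eqP; apply: H; by rewrite E divfK.
  have u2 : n1 ^+ 2 != n1 ^+ 2 / b.
    apply: key bn1 => E; apply: (mulfI (expf_neq0 2 nn1)); by rewrite E mulr1.
  have u5 : n2 ^+ 2 != n2 ^+ 2 / b.
    apply: key bn1 => E; apply: (mulfI (expf_neq0 2 nn2)); by rewrite E mulr1.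
  have u3 : n1 ^+ 2 != n2 ^+ 2 / b.
    apply: key bnB4 => E.
    by rewrite -[b]mul1r -(expr1n C 2) -h12 exprMn mulrAC E -exprD.
  have u4 : n2 ^+ 2 != n1 ^+ 2 / b.
    apply: key bnA4 => E.
    by rewrite -[b]mul1r -(expr1n C 2) -h12 exprMn -mulrA E -exprD.
  have u6 : n1 ^+ 2 / b != n2 ^+ 2 / b.
    apply: contra hsq => /eqP E; apply/eqP.
    by rewrite -(divfK bn0 (n1 ^+ 2)) E divfK.
  by rewrite /= !inE !negb_or hsq u2 u3 u4 u5 u6.
- by [].
- rewrite /= !rootX !FF_cubic !beig andbT.
  apply/and4P; split; apply/eqP.
  - rewrite (_ : n1 * 1 * 1 - n2 * 1 * n1 ^+ 2 = 0) ?mulr0 ?mul0r //.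
    rewrite (_ : n1 * 1 * 1 - n2 * 1 * n1 ^+ 2 = n1 * (1 - n1 * n2)); last by ring.
    by rewrite h12 subrr mulr0.
  - rewrite (_ : n1 * n2 ^+ 2 * 1 - n2 * 1 * 1 = 0) ?mulr0 ?mul0r //.
    rewrite (_ : n1 * n2 ^+ 2 * 1 - n2 * 1 * 1 = n2 * (n1 * n2 - 1)); last by ring.
    by rewrite h12 subrr mulr0.
  - rewrite (_ : n1 * 1 * 1 - n2 * b * (n1 ^+ 2 / b) = 0) ?mulr0 ?mul0r //.
    rewrite (_ : n1 * 1 * 1 - n2 * b * (n1 ^+ 2 / b) = n1 * (1 - n1 * n2)); last by field.
    by rewrite h12 subrr mulr0.
  - rewrite (_ : n1 * (n2 ^+ 2 / b) * b - n2 * 1 * 1 = 0) ?mulr0 ?mul0r //.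
    rewrite (_ : n1 * (n2 ^+ 2 / b) * b - n2 * 1 * 1 = n2 * (n1 * n2 - 1)); last by field.
    by rewrite h12 subrr mulr0.
Qed.
End Wit.


Unset Implicit Arguments.
Theorem proposition5p38 (R : realType) :
  exists delta : R, 0 < delta /\
    forall (eps : R) (g : 'M[complex R]_2),
      0 < eps < delta -> is_SU2 g -> lifts_rotation_by g eps ->
      has_degree (Upsilon g) 4.
Proof.
exists (pi / 2); split; first by rewrite divr_gt0 // pi_gt0.
move=> eps g He Hs Hl.
have [t0 t4] := su2_t He Hs Hl.
have D : \det g = 1 by case: Hs.
have [p [q [Fp cop]]] := witness D t0 t4.
exists (Pmp g); split; first exact: Pmp_neq0 Fp cop.
move=> p' q' HP; exact: Pmp_good D HP.
Qed.
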